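(* Let $d\ge1$ and $p\ge2$ be integers. There exists a constant $C>0$ depending only on $p$ such that the following holds. Let $s\ge p$ be an integer, $L,M>0$, and let $f:\mathbb{R}^d\to\mathbb{R}$ be a convex function with a minimizer $x^*$. Let $y_c=[v_c;x_c;t_c]\in\mathbb{R}^{2d+1}$ with $t_c\ge1$, and set $R=1/t_c$. Suppose that on the closed ball $B(x_c,R)=\{x:\|x-x_c\|\le R\}$ the function $f$ is $(s+1)$-times continuously differentiable and satisfies (i) $\|\nabla^{(i)} f(x)\|\le [L(f(x)-f(x^* ))]^{\frac{p-i}{p}}$ for all $x\in B(x_c,R)$, $i\in\{1,\dots,p-1\}$, and (ii) $\|\nabla^{(i)} f(x)\|\le M$ for all $x\in B(x_c,R)$, $i\in\{p,\dots,s+1\}$. Then for every $y\in U_{R,0.2}(y_c)$, $$\|\pi_{v,x}F(y)\|\le \frac{C\,(\mathcal{E}(y_c)+1)(L+M+1)}{t_c}.$$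
   Context: Points of $\mathbb{R}^{2d+1}$ are written $y=[v;x;t]$. The vector field $F:\mathbb{R}^{2d+1}\to\mathbb{R}^{2d+1}$ (defined for $t>0$) is $F([v;x;t])=\big[-\frac{2p+1}{t}v-p^2t^{p-2}\nabla f(x);\ v;\ 1\big]$, i.e. the first-order form of the ODE $\dot x=v$, $\dot v=-\frac{2p+1}{t}v-p^2t^{p-2}\nabla f(x)$, $\dot t=1$. The projection $\pi_{v,x}([v;x;t])=[v;x]\in\mathbb{R}^{2d}$. $U_{R,0.2}(y_c)=\{[v;x;t]:\|v-v_c\|\le R,\ \|x-x_c\|\le R,\ |t-t_c|\le0.2\}$. The Lyapunov function is $\mathcal{E}([v;x;t])=\frac{t^2}{4p^2}\|v\|^2+\|x+\frac{t}{2p}v-x^*\|^2+t^p(f(x)-f(x^* ))$. Norms of derivative tensors are operator norms. *)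

(* Defs.v *)
From HB Require Import structures.
From mathcomp Require Import all_boot all_order all_algebra.
From mathcomp Require Import all_classical all_reals all_analysis.
Set Implicit Arguments. Unset Strict Implicit. Unset Printing Implicit Defensive.
Import Order.TTheory GRing.Theory Num.Theory.
Import numFieldNormedType.Exports.
Local Open Scope classical_set_scope.
Local Open Scope ring_scope.

Section Defs.
Variables (R : realType) (d : nat).
Notation V := 'rV[R]_d.

Definition enorm (n : nat) (x : 'rV[R]_n) : R :=
  Num.sqrt (\sum_(i < n) x 0 i ^+ 2).

Definition cball (c : V) (r : R) : set V := [set x | enorm (x - c) <= r].

(* Iterated directional derivative: iderive f [:: h1; ...; hi] x
   = D^i f(x)[h1, ..., hi]. *)
Fixpoint iderive (f : V -> R) (hs : seq V) : V -> R :=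
  match hs with
  | [::] => f
  | h :: hs' => fun x => derive (iderive f hs') x h
  end.

Definition Ck_on (k : nat) (f : V -> R) (U : set V) : Prop :=
  forall hs : seq V,
    ((size hs <= k)%N -> forall x, U x -> continuous_at x (iderive f hs)) /\
    ((size hs < k)%N -> forall x, U x -> differentiable (iderive f hs) x).

(* "f is (k)-times continuously differentiable on the closed set K":
   f is C^k on some open set containing K. *)
Definition Ck_on_closed (k : nat) (f : V -> R) (K : set V) : Prop :=
  exists U : set V, open U /\ K `<=` U /\ Ck_on k f U.

(* Operator norm bound of the i-th derivative tensor at x (w.r.t. the
   Euclidean norm): || nabla^(i) f(x) || <= B, i.e.
   sup_{||h_j|| <= 1} |D^i f(x)[h_1,...,h_i]| <= B. *)
Definition opnorm_le (f : V -> R) (i : nat) (x : V) (B : R) : Prop :=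
  forall hs : seq V, size hs = i -> all (fun h => enorm h <= 1) hs ->
    `|iderive f hs x| <= B.

Definition grad (f : V -> R) (x : V) : V :=
  \row_(j < d) derive f x (delta_mx 0 j).

Definition convex_fun (f : V -> R) : Prop :=
  forall (x y : V) (l : R), 0 <= l <= 1 ->
    f (l *: x + (1 - l) *: y) <= l * f x + (1 - l) * f y.

Definition is_minimizer (f : V -> R) (xs : V) : Prop :=
  forall x, f xs <= f x.

(* Points y = [v; x; t] of R^{2d+1}, as triples. *)
Definition pt := (V * V * R)%type.

Definition Fvf (p : nat) (f : V -> R) (y : pt) : pt :=
  let: (v, x, t) := y in
  ((- (((2 * p + 1)%:R) / t)) *: v - ((p ^ 2)%:R * t ^+ (p - 2)) *: grad f x,
   v, 1).

Definition pi_vx (y : pt) : 'rV[R]_(d + d) :=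
  let: (v, x, _) := y in row_mx v x.

Definition Unbhd (r : R) (yc : pt) : set pt :=
  [set y | enorm (y.1.1 - yc.1.1) <= r /\ enorm (y.1.2 - yc.1.2) <= r
           /\ `|y.2 - yc.2| <= 1 / 5].

Definition Energy (p : nat) (f : V -> R) (xs : V) (y : pt) : R :=
  let: (v, x, t) := y in
  t ^+ 2 / (4 * (p ^ 2)%:R) * enorm v ^+ 2
  + enorm (x + (t / (2 * p%:R)) *: v - xs) ^+ 2
  + t ^+ p * (f x - f xs).

End Defs.

(* Main.v *)
Require Import Defs.
From HB Require Import structures.
From mathcomp Require Import all_boot all_order all_algebra.
From mathcomp Require Import all_classical all_reals all_analysis.
From mathcomp Require Import ring lra zify.
Import Order.TTheory GRing.Theory Num.Theory.
Import numFieldNormedType.Exports.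
Local Open Scope classical_set_scope.
Local Open Scope ring_scope.
Set Implicit Arguments. Unset Strict Implicit.
Section Enorm.
Variable R : realType.

Lemma sumsq_ge0 n (x : 'rV[R]_n) : 0 <= \sum_(i < n) x 0 i ^+ 2.
Proof. by apply: sumr_ge0 => i _; rewrite sqr_ge0. Qed.

Lemma enorm_ge0 n (x : 'rV[R]_n) : 0 <= enorm x.
Proof. exact: sqrtr_ge0. Qed.

Lemma enorm_sq n (x : 'rV[R]_n) : enorm x ^+ 2 = \sum_(i < n) x 0 i ^+ 2.
Proof. by rewrite /enorm sqr_sqrtr // sumsq_ge0. Qed.

Lemma sqrt_le (a b : R) : 0 <= b -> a <= b ^+ 2 -> Num.sqrt a <= b.
Proof.
move=> b0 ab; rewrite -(ger0_norm b0) -sqrtr_sqr.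
by rewrite ler_sqrt // sqr_ge0.
Qed.

Lemma enormZ n (c : R) (x : 'rV[R]_n) : enorm (c *: x) = `|c| * enorm x.
Proof.
rewrite /enorm (_ : \sum_(i < n) (c *: x) 0 i ^+ 2 = c ^+ 2 * \sum_(i < n) x 0 i ^+ 2).
  by rewrite sqrtrM ?sqr_ge0 // sqrtr_sqr.
rewrite mulr_sumr; apply: eq_bigr => i _; rewrite mxE; ring.
Qed.

Lemma enormN n (x : 'rV[R]_n) : enorm (- x) = enorm x.
Proof. by rewrite -scaleN1r enormZ normrN normr1 mul1r. Qed.

Lemma enormB n (x y : 'rV[R]_n) : enorm (x - y) = enorm (y - x).
Proof. by rewrite -enormN opprB. Qed.

Lemma enormD2 n (x y : 'rV[R]_n) : enorm (x + y) <= 2 * (enorm x + enorm y).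
Proof.
apply: sqrt_le; first by have := enorm_ge0 x; have := enorm_ge0 y; lra.
have h : \sum_(i < n) (x + y) 0 i ^+ 2 <= 2 * (enorm x ^+ 2 + enorm y ^+ 2).
  rewrite !enorm_sq -big_split mulr_sumr /=; apply: ler_sum => i _.
  rewrite mxE; have := sqr_ge0 (x 0 i - y 0 i); nra.
apply: (le_trans h); have := enorm_ge0 x; have := enorm_ge0 y; nra.
Qed.

Lemma enorm_row_mx n (x y : 'rV[R]_n) : enorm (row_mx x y) <= enorm x + enorm y.
Proof.
apply: sqrt_le; first by have := enorm_ge0 x; have := enorm_ge0 y; lra.
rewrite big_split_ord /=.
rewrite (eq_bigr (fun i => x 0 i ^+ 2)); last by move=> i _; rewrite row_mxEl.
rewrite [X in _ + X](eq_bigr (fun i => y 0 i ^+ 2)); last by move=> i _; rewrite row_mxEr.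
rewrite -!enorm_sq; have := enorm_ge0 x; have := enorm_ge0 y; nra.
Qed.

Lemma enorm_eq0 n (x : 'rV[R]_n) : enorm x = 0 -> x = 0.
Proof.
move=> h; have : \sum_(i < n) x 0 i ^+ 2 = 0 by rewrite -enorm_sq h expr0n.
move/eqP; rewrite psumr_eq0; last by move=> i _; rewrite sqr_ge0.
move/allP => H; apply/rowP => j; rewrite mxE.
by have /(_ (mem_index_enum j)) := H j; rewrite implyTb sqrf_eq0 => /eqP.
Qed.

End Enorm.

Section Line.
Variable R : realType.

Lemma line_derive n (G : 'rV[R]_n -> R) (a h : 'rV[R]_n) (s : R) :
  differentiable G (a + s *: h) ->
  is_derive s 1 (fun t : R => G (a + t *: h)) (derive G (a + s *: h) h).
Proof.
move=> dG.
have E : (fun t : R => t^-1 *: (((fun t : R => G (a + t *: h)) \o shift s) (t *: 1)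
                               - G (a + s *: h)))
       = (fun t : R => t^-1 *: ((G \o shift (a + s *: h)) (t *: h) - G (a + s *: h))).
  apply/funext => t /=; congr (_ *: (G _ - _)).
  by rewrite /shift /= [t%:A]mulr1 scalerDl addrCA.
have D : derivable (fun t : R => G (a + t *: h)) s 1.
  by rewrite /derivable E; exact: diff_derivable.
have -> : derive G (a + s *: h) h = derive (fun t : R => G (a + t *: h)) s 1.
  by rewrite /derive E.
exact: derivableP.
Qed.

Lemma chain_bound (phi : nat -> R -> R) (n : nat) (r K M : R) :
  0 < r ->
  (forall k, (k < n)%N -> forall s, 0 <= s <= r -> is_derive s 1 (phi k) (phi k.+1 s)) ->
  (forall s, 0 <= s <= r -> `|phi n s| <= M) ->
  (forall k, (k < n)%N -> `|phi k 0| <= K * r ^+ (n - k)) ->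
  forall j, (j <= n)%N -> forall s, 0 <= s <= r ->
    `|phi (n - j)%N s| <= (j%:R * K + M) * r ^+ j.
Proof.
move=> r0 Hd HM H0; elim=> [|j IH] jn s sr.
  by rewrite subn0 expr0 mulr1 mul0r add0r; exact: HM.
have jn' : (j <= n)%N by apply: ltnW.
set k := (n - j.+1)%N.
have kk : k.+1 = (n - j)%N by rewrite /k subnSK.
have kn : (k < n)%N by rewrite kk leq_subr.
have s0 : 0 <= s by case/andP: sr.
have sr' : s <= r by case/andP: sr.
have [c cI eq] : exists2 c, c \in `[0, s] & phi k s - phi k 0 = phi k.+1 c * (s - 0).
  apply: MVT_segment => //.
    move=> x; rewrite in_itv /= => /andP [x0 xs]; apply: Hd => //.
    apply/andP; split; lra.
  apply: derivable_within_continuous => x; rewrite in_itv /= => /andP [x0 xs].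
  have : 0 <= x <= r by apply/andP; split; lra.
  by move/(Hd k kn x) => [].
have cr : 0 <= c <= r.
  by move: cI; rewrite in_itv /= => /andP [c0 cs]; apply/andP; split; lra.
have B1 := IH jn' c cr; rewrite -kk in B1.
have B0 := H0 k kn; rewrite (_ : (n - k = j.+1)%N) in B0; last by rewrite /k subKn.
have -> : phi k s = phi k 0 + phi k.+1 c * s by rewrite subr0 in eq; lra.
apply: (le_trans (ler_normD _ _)); rewrite normrM (ger0_norm s0).
have : `|phi k.+1 c| * s <= (j%:R * K + M) * r ^+ j * r.
  apply: ler_pM => //; apply: (le_trans _ B1); exact: normr_ge0.
rewrite exprSr mulrSr; rewrite exprSr in B0; lra.
Qed.

End Line.

Section Grad.
Variable R : realType.

Lemma grad_bound d (f : 'rV[R]_d -> R) (x : 'rV[R]_d) (B : R) :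
  differentiable f x -> (forall e, enorm e <= 1 -> `|derive f x e| <= B) ->
  enorm (grad f x) <= B.
Proof.
move=> df H; set g := grad f x.
have B0 : 0 <= B.
  apply: le_trans (H 0 _); first exact: normr_ge0.
  by rewrite /enorm big1 ?sqrtr0 // => i _; rewrite mxE expr0n.
case: (eqVneq (enorm g) 0) => [->//|gn0].
have gp : 0 < enorm g by rewrite lt_def gn0 enorm_ge0.
set e := (enorm g)^-1 *: g.
have e1 : enorm e <= 1.
  by rewrite /e enormZ ger0_norm ?invr_ge0 ?enorm_ge0 // mulVf.
have := H e e1; rewrite deriveE // /e linearZ /=.
have -> : 'd f x g = enorm g ^+ 2.
  rewrite {1}(row_sum_delta g) linear_sum enorm_sq; apply: eq_bigr => j _.
  rewrite linearZ /= -deriveE // {2}/g /grad mxE /=; by rewrite expr2.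
have -> : (enorm g)^-1 *: enorm g ^+ 2 = enorm g by change ((enorm g)^-1 * enorm g ^+ 2 = enorm g); field.
by rewrite ger0_norm // enorm_ge0.
Qed.

Lemma powR_le1D (b q : R) : 0 <= b -> 0 <= q <= 1 -> b `^ q <= 1 + b.
Proof.
move=> b0 /andP [q0 q1].
case: (lerP 1 b) => b1.
  by apply: le_trans (ler1_powR _ _) _ => //; lra.
case: (eqVneq b 0) => [->|bn0].
  case: (eqVneq q 0) => [->|qn0]; first by rewrite powRr0; lra.
  by rewrite powR0 //; lra.
have bp : 0 < b by rewrite lt_def bn0 b0.
apply: (@le_trans _ _ (b `^ 0)).
  by apply: ger_powR => //; apply/andP; split => //; exact: ltW.
rewrite powRr0; lra.
Qed.

End Grad.

Section Pow.
Variable R : realType.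

Lemma pow_bound (L g E r : R) (p j : nat) : (0 < p)%N -> (j <= p)%N ->
  0 <= L -> 0 <= g -> 0 <= E -> 0 < r -> g <= E * r ^+ p ->
  (L * g) `^ (j%:R / p%:R) <= (1 + L * E) * r ^+ j.
Proof.
move=> p0 jp L0 g0 E0 r0 gE.
set q := j%:R / p%:R.
have pR : 0 < p%:R :> R by rewrite ltr0n.
have q01 : 0 <= q <= 1.
  apply/andP; split; first by rewrite /q divr_ge0 // ler0n.
  by rewrite /q ler_pdivrMr // mul1r ler_nat.
have rp0 : 0 <= r ^+ p by rewrite exprn_ge0 // ltW.
have h1 : (L * g) `^ q <= (L * E * r ^+ p) `^ q.
  apply: ge0_ler_powR; first by case/andP: q01.
  - by rewrite nnegrE mulr_ge0.
  - by rewrite nnegrE !mulr_ge0.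
  by rewrite -mulrA ler_wpM2l.
apply: (le_trans h1); rewrite powRM ?mulr_ge0 //.
have -> : (r ^+ p) `^ q = r ^+ j.
  rewrite -powR_mulrn ?ltW // -powRrM /q mulrC divfK ?powR_mulrn ?ltW //.
  by rewrite gt_eqF.
apply: ler_wpM2r; first by rewrite exprn_ge0 // ltW.
by apply: powR_le1D => //; rewrite mulr_ge0.
Qed.

End Pow.

Section GradMain.
Variable R : realType.

Lemma enorm0 n : enorm (0 : 'rV[R]_n) = 0.
Proof. by rewrite /enorm big1 ?sqrtr0 // => i _; rewrite mxE expr0n. Qed.

Lemma grad_main d (m s : nat) (L M : R) (f : 'rV[R]_d -> R) (xs xc : 'rV[R]_d) (tc E : R) x :
  (m.+2 <= s)%N -> 0 <= L -> 1 <= tc -> 0 <= E ->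
  tc ^+ m.+2 * (f xc - f xs) <= E -> 0 <= f xc - f xs ->
  Ck_on_closed s.+1 f (cball xc (1 / tc)) ->
  (forall x, cball xc (1 / tc) x -> forall i : nat, (1 <= i <= m.+1)%N ->
       opnorm_le f i x ((L * (f x - f xs)) `^ ((m.+2 - i)%:R / m.+2%:R))) ->
  (forall x, cball xc (1 / tc) x -> forall i : nat, (m.+2 <= i <= s.+1)%N ->
       opnorm_le f i x M) ->
  cball xc (1 / tc) x ->
  enorm (grad f x) <= (m.+1%:R * (1 + L * E) + M) * (1 / tc) ^+ m.+1.
Proof.
move=> ms L0 tc1 E0 gE g0 [U [oU [bU CU]]] Hi Hii xb.
set r := 1 / tc in bU Hi Hii xb *.
have tc0 : 0 < tc by lra.
have r0 : 0 < r by rewrite /r divr_gt0.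
have tcr : tc * r = 1 by rewrite /r mul1r mulfV // gt_eqF.
have dif : forall hs z, (size hs < s.+1)%N -> cball xc r z ->
    differentiable (iderive f hs) z.
  by move=> hs z hz bz; apply: (CU hs).2 => //; apply: bU.
apply: grad_bound; first by apply: (dif [::]).
move=> e e1.
set h := tc *: (x - xc).
have h1 : enorm h <= 1.
  rewrite /h enormZ ger0_norm; last exact: ltW.
  have : enorm (x - xc) <= r := xb.
  have := enorm_ge0 (x - xc); nra.
have hn0 := enorm_ge0 h.
have gb : forall s0, 0 <= s0 <= r -> cball xc r (xc + s0 *: h).
  move=> s0 /andP [s00 s0r]; rewrite /cball /= (addrC xc) addrK enormZ ger0_norm //.
  nra.
have cb0 : cball xc r xc by rewrite /cball /= subrr enorm0 ltW.
have all_ok : forall k, all (fun h0 => enorm h0 <= 1) (nseq k h ++ [:: e]).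
  move=> k; rewrite all_cat; apply/andP; split; last by rewrite /= e1.
  by apply/allP => z; rewrite mem_nseq => /andP [_ /eqP ->].
have sz : forall k, size (nseq k h ++ [:: e]) = k.+1.
  by move=> k; rewrite size_cat size_nseq addn1.
set phi := fun k s0 => iderive f (nseq k h ++ [:: e]) (xc + s0 *: h).
have Hd : forall k, (k < m.+1)%N -> forall s0, 0 <= s0 <= r ->
    is_derive s0 1 (phi k) (phi k.+1 s0).
  move=> k km s0 sr; rewrite /phi.
  apply: (line_derive (G := iderive f (nseq k h ++ [:: e]))).
  by apply: dif; [rewrite sz ltnS; exact: leq_trans (leqW km) ms | exact: gb].
have HM : forall s0, 0 <= s0 <= r -> `|phi m.+1 s0| <= M.
  move=> s0 sr; apply: (Hii _ (gb s0 sr) m.+2) => //.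
  by apply/andP; split => //; exact: leqW ms.
have H0 : forall k, (k < m.+1)%N -> `|phi k 0| <= (1 + L * E) * r ^+ (m.+1 - k).
  move=> k km; rewrite /phi scale0r addr0.
  have kk : (1 <= k.+1 <= m.+1)%N by apply/andP; split.
  have H := Hi xc cb0 k.+1 kk (nseq k h ++ [:: e]) (sz k) (all_ok k).
  apply: (le_trans H).
  have -> : (m.+2 - k.+1 = m.+1 - k)%N by rewrite subSS.
  apply: pow_bound => //; first by apply: leq_trans (leq_subr _ _) (leqnSn _).
  have -> : f xc - f xs = (r ^+ m.+2 * tc ^+ m.+2) * (f xc - f xs).
    by rewrite -exprMn (mulrC r tc) tcr expr1n mul1r.
  rewrite -mulrA mulrC; apply: ler_wpM2r; first by rewrite exprn_ge0 // ltW.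
  exact: gE.
have rr : 0 <= r <= r by apply/andP; split; [exact: ltW|].
have := chain_bound r0 Hd HM H0 (leqnn m.+1) rr.
by rewrite subnn /phi /= /h scalerA (mulrC r tc) tcr scale1r addrC subrK.
Qed.

End GradMain.

Unset Implicit Arguments. Set Strict Implicit.

Lemma ring_aux (R : realType) (P Q W r a b : R) :
  (P ^+ 2 * (Q * a)) * (P * W * (b * r)) = P ^+ 3 * Q * W * r * (a * b).
Proof. ring. Qed.

Theorem mainTheorem2 (R : realType) (p : nat) (hp : (2 <= p)%N) :
  exists C : R, 0 < C /\
  forall (d s : nat) (L M : R) (f : 'rV[R]_d -> R) (xs : 'rV[R]_d)
         (vc xc : 'rV[R]_d) (tc : R),
    (1 <= d)%N -> (p <= s)%N -> 0 < L -> 0 < M ->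
    convex_fun f -> is_minimizer f xs ->
    1 <= tc ->
    Ck_on_closed s.+1 f (cball xc (1 / tc)) ->
    (forall x, cball xc (1 / tc) x -> forall i : nat, (1 <= i <= p.-1)%N ->
       opnorm_le f i x ((L * (f x - f xs)) `^ ((p - i)%:R / p%:R))) ->
    (forall x, cball xc (1 / tc) x -> forall i : nat, (p <= i <= s.+1)%N ->
       opnorm_le f i x M) ->
    forall y : pt R d, Unbhd (1 / tc) (vc, xc, tc) y ->
      enorm (pi_vx (Fvf p f y))
        <= C * (Energy p f xs (vc, xc, tc) + 1) * (L + M + 1) / tc.
Proof.
destruct p as [|[|m]]; [by [] | by [] | clear hp].
set P : R := m.+2%:R.
have P2 : 2 <= P by rewrite /P ler_nat.
set Q : R := 2 ^+ m.
have Q1 : 1 <= Q by rewrite /Q; apply: exprn_ege1; lra.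
exists (4 * (2 * P + 1) * (4 * P + 2) + 2 * P ^+ 3 * Q + (4 * P + 2)).
split.
  have : 0 <= P ^+ 3 * Q by rewrite mulr_ge0 // ?exprn_ge0; lra.
  nra.
move=> d s L M f xs vc xc tc d1 ms L0 M0 _ xmin tc1 Ck Hi Hii [[v x] t] [vb [xb tb]].
simpl in vb, xb, tb.
set E := Energy m.+2 f xs (vc, xc, tc).
set r := 1 / tc in vb xb Ck Hi Hii *.
have tc0 : 0 < tc by lra.
have r0 : 0 < r by rewrite /r divr_gt0.
have tcr : tc * r = 1 by rewrite /r mul1r mulfV // gt_eqF.
have g0 : 0 <= f xc - f xs by rewrite subr_ge0.
have ev0 := enorm_ge0 vc.
have En1 : 0 <= tc ^+ 2 / (4 * (m.+2 ^ 2)%:R) * enorm vc ^+ 2.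
  by rewrite !mulr_ge0 ?exprn_ge0 // ?invr_ge0 ?mulr_ge0 // ?ler0n ?ltW.
have En2 : 0 <= enorm (xc + (tc / (2 * m.+2%:R)) *: vc - xs) ^+ 2 by rewrite sqr_ge0.
have En3 : 0 <= tc ^+ m.+2 * (f xc - f xs) by rewrite mulr_ge0 // exprn_ge0 // ltW.
have E0 : 0 <= E by rewrite /E /Energy /=; apply: addr_ge0; [apply: addr_ge0|].
have Eg : tc ^+ m.+2 * (f xc - f xs) <= E.
  by rewrite /E /Energy /=; apply: ler_wpDl => //; apply: addr_ge0.
have Ev : tc ^+ 2 / (4 * (m.+2 ^ 2)%:R) * enorm vc ^+ 2 <= E.
  by rewrite /E /Energy /=; apply: ler_wpDr => //; apply: ler_wpDr.
set W := (E + 1) * (L + M + 1).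
have EL : 0 <= E * L by rewrite mulr_ge0 // ltW.
have EM : 0 <= E * M by rewrite mulr_ge0 // ltW.
have W1 : E + 1 <= W by rewrite /W; nra.
have WK : 1 + L * E <= W by rewrite /W; lra.
have WM : M <= W by rewrite /W; lra.
have ev_b : enorm vc <= 2 * P * (E + 1) * r.
  have PP : (m.+2 ^ 2)%:R = P ^+ 2 by rewrite /P natrX.
  rewrite PP in Ev.
  have Ev' : (tc * enorm vc) ^+ 2 <= 4 * P ^+ 2 * E.
    have h4 : 0 < 4 * P ^+ 2 by rewrite mulr_gt0 // exprn_gt0 //; lra.
    move: Ev; rewrite exprMn mulrAC ler_pdivrMr //; lra.
  have Ev'' : (tc * enorm vc) ^+ 2 <= (2 * P * (E + 1)) ^+ 2.
    apply: le_trans Ev' _; rewrite !exprMn.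
    have : 0 <= P ^+ 2 by rewrite exprn_ge0 //; lra.
    nra.
  have : tc * enorm vc <= 2 * P * (E + 1).
    rewrite -ler_sqr ?nnegrE //; first by rewrite mulr_ge0 // ltW.
    by rewrite !mulr_ge0 //; lra.
  move=> H; have -> : enorm vc = tc * enorm vc * r by rewrite mulrAC tcr mul1r.
  by apply: ler_wpM2r => //; exact: ltW.
have v_b : enorm v <= (4 * P + 2) * W * r.
  have -> : v = vc + (v - vc) by rewrite addrC subrK.
  apply: le_trans (enormD2 _ _) _.
  have Wr : (E + 1) * r <= W * r by apply: ler_wpM2r => //; exact: ltW.
  have e1 : 0 <= E + 1 by lra.
  have p0 : 0 <= P by lra.
  have := mulr_ge0 p0 (mulr_ge0 e1 (ltW r0)).
  have : P * ((E + 1) * r) <= P * (W * r) by apply: ler_wpM2l => //; lra.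
  move: Wr.
  have : r <= W * r by rewrite -{1}(mul1r r) ler_wpM2r //; [exact: ltW | lra].
  nra.
have P1 : P = m.+1%:R + 1 by rewrite /P -natr1.
have g_b : enorm (grad f x) <= P * W * r ^+ m.+1.
  have gm := grad_main ms (ltW L0) tc1 E0 Eg g0 Ck Hi Hii xb.
  apply: le_trans gm _; apply: ler_wpM2r; first by rewrite exprn_ge0 // ltW.
  have m0 : 0 <= m.+1%:R :> R by rewrite ler0n.
  have : m.+1%:R * (1 + L * E) <= m.+1%:R * W by apply: ler_wpM2l.
  rewrite P1; lra.
move: tb; rewrite ler_norml => /andP [tb1 tb2].
have t0 : 4 / 5 <= t by lra.
rewrite /Fvf /pi_vx /=.
have -> : (m.+2 - 2 = m)%N by rewrite subSS subSS subn0.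
set A : R := (2 * m.+2 + 1)%:R.
have AP : A = 2 * P + 1 by rewrite /A natrD natrM.
set Bc : R := (m.+2 ^ 2)%:R.
have BP : Bc = P ^+ 2 by rewrite /Bc natrX.
set g := grad f x.
have eg0 := enorm_ge0 g.
have evv0 := enorm_ge0 v.
have tp : 0 < t by lra.
have At0 : 0 <= A / t by rewrite divr_ge0 // ?ltW // AP; lra.
have Bt0 : 0 <= Bc * t ^+ m by rewrite mulr_ge0 // ?exprn_ge0 // ?ltW // BP exprn_ge0 //; lra.
have w_b : enorm (- (A / t) *: v - (Bc * t ^+ m) *: g)
    <= 2 * ((A / t) * enorm v + (Bc * t ^+ m) * enorm g).
  apply: le_trans (enormD2 _ _) _.
  by rewrite enormN !enormZ normrN !ger0_norm.
have At : A / t <= 2 * A.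
  rewrite ler_pdivrMr // AP.
  have : 0 <= (2 * P + 1) * (2 * t - 1) by apply: mulr_ge0; lra.
  lra.
have a_b : (A / t) * enorm v <= (2 * A) * ((4 * P + 2) * W * r).
  by apply: ler_pM.
have T : t ^+ m <= Q * tc ^+ m.
  rewrite /Q -exprMn; apply: lerXn2r; rewrite ?nnegrE; lra.
have b_b : (Bc * t ^+ m) * enorm g <= P ^+ 3 * Q * W * r.
  have tcm : tc ^+ m * r ^+ m = 1 by rewrite -exprMn tcr expr1n.
  have E1 := @ring_aux _ P Q W r (tc ^+ m) (r ^+ m).
  rewrite tcm mulr1 -exprSr in E1; rewrite -E1.
  apply: ler_pM => //; rewrite BP; apply: ler_wpM2l => //.
  by rewrite exprn_ge0 //; lra.
apply: le_trans (enorm_row_mx _ _) _.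
have -> : (4 * (2 * P + 1) * (4 * P + 2) + 2 * P ^+ 3 * Q + (4 * P + 2)) * (E + 1) *
   (L + M + 1) / tc = (4 * (2 * P + 1) * (4 * P + 2) + 2 * P ^+ 3 * Q + (4 * P + 2)) * W * r.
  by rewrite /W /r mul1r !mulrA.
rewrite AP in a_b.
lra.
Qed.
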